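(* Let $\bar\Gamma$ be a finite connected graph with $k$ vertices, equipped with a groupoid representation $(\mathscr H_v, U_f)$ as described in the context, let $\mathscr H=\bigoplus_v \mathscr H_v$ and let $H$ be the associated Hamiltonian. Let $\boldsymbol\tau=(\tau,r,<)$ and $\boldsymbol\tau'=(\tau',r',<')$ be two ordered rooted spanning trees of $\bar\Gamma$, with associated matrix Hamiltonians $H_{\boldsymbol\tau}\in M_k(\mathscr A_r)$ and $H_{\boldsymbol\tau'}\in M_k(\mathscr A_{r'})$. Then there is a matrix $M\in M_k(\mathscr A_r)$ with $MM^*=M^*M=\mathrm{id}$ such that $$M H_{\boldsymbol\tau} M^* = U^{\tau}_{r r'}\, H_{\boldsymbol\tau'}\, U^{\tau}_{r' r},$$ where $U^\tau_{rr'}$ and $U^\tau_{r'r}$ act diagonally (as scalar matrices) between $\mathscr H_{r'}^k$ and $\mathscr H_r^k$. Moreover $M$ is an element of the gauge group, i.e. $M$ is the product of a diagonal matrix whose diagonal entries are unitary elements of $\mathscr A_r$ and a permutation matrix.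
   Context: $\bar\Gamma$ is a finite connected graph (multiple edges and loops allowed). Each edge has two orientations; for an oriented edge $f$ write $\bar f$ for the reversed one. A groupoid representation of $\bar\Gamma$ assigns to every vertex $v$ a separable Hilbert space $\mathscr H_v$ and to every oriented edge $f$ from $v$ to $w$ a unitary $U_f:\mathscr H_v\to\mathscr H_w$ with $U_{\bar f}=U_f^{*}$. For a walk $\gamma$ traversing oriented edges $f_1,\dots,f_m$ in this order set $U(\gamma)=U_{f_m}\cdots U_{f_1}$. The Hamiltonian is $H=\sum_{f}U_f$ on $\mathscr H=\bigoplus_v\mathscr H_v$, summed over all oriented edges (each $U_f$ viewed as a partial isometry on $\mathscr H$); thus for vertices $u,w$ its component $H_{wu}:\mathscr H_u\to\mathscr H_w$ is $\sum_{f \text{ from } u \text{ to } w}U_f$. An ordered rooted spanning tree $\boldsymbol\tau=(\tau,r,<)$ consists of a spanning tree $\tau$, a root vertex $r$, and a total order $u_1<u_2<\dots<u_k$ of all vertices with $u_1=r$. For vertices $x,y$ let $U^\tau_{yx}:=U(\gamma)$ where $\gamma$ is the unique non-backtracking path in $\tau$ from $x$ to $y$ (so $U^\tau_{yx}:\mathscr H_x\to\mathscr H_y$ and $U^\tau_{xy}=(U^\tau_{yx})^*$). $\mathscr A_r\subset B(\mathscr H_r)$ denotes the $C^*$-algebra generated by the operators $U(\gamma)$ for closed walks $\gamma$ based at $r$. The matrix Hamiltonian $H_{\boldsymbol\tau}\in M_k(\mathscr A_r)$, acting on $\mathscr H_r^k$, has entries $(H_{\boldsymbol\tau})_{ij}=U^\tau_{r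 u_i}H_{u_iu_j}U^\tau_{u_j r}$. For $\boldsymbol\tau'$ the same definitions are made with $\tau'$, root $r'$ and order $u'_1<'\dots<'u'_k$. *)

(* Defs.v *)
From HB Require Import structures.
From mathcomp Require Import all_boot all_order all_algebra all_fingroup.
From mathcomp Require Import reals complex.
From Stdlib Require Import ClassicalEpsilon.
Set Implicit Arguments. Unset Strict Implicit. Unset Printing Implicit Defensive.
Import Order.TTheory GRing.Theory Num.Theory.
Local Open Scope ring_scope.

Section GroupoidRep.
Variable R : realType.
Notation C := (R[i]).

Variable Hs : lmodType C.
Variable ip : Hs -> Hs -> C.

Definition sqn (x : Hs) : C := ip x x.

Definition is_inner : Prop :=
  [/\ (forall (a : C) (x y z : Hs), ip (a *: x + y) z = a * ip x z + ip y z),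
      (forall x y : Hs, ip y x = (ip x y)^*),
      (forall x : Hs, 0 <= ip x x) &
      (forall x : Hs, ip x x = 0 -> x = 0)].

Definition is_complete : Prop :=
  forall u : nat -> Hs,
    (forall eps : C, 0 < eps -> exists N : nat, forall m n : nat,
        (N <= m)%N -> (N <= n)%N -> sqn (u m - u n) < eps) ->
    exists l : Hs, forall eps : C, 0 < eps -> exists N : nat, forall n : nat,
        (N <= n)%N -> sqn (u n - l) < eps.

Definition is_separable : Prop :=
  exists d : nat -> Hs, forall (x : Hs) (eps : C), 0 < eps ->
    exists n : nat, sqn (x - d n) < eps.

Definition is_hilbert : Prop := [/\ is_inner, is_complete & is_separable].

Definition op := Hs -> Hs.

Definition is_linop (X : op) : Prop :=
  forall (a : C) (x y : Hs), X (a *: x + y) = a *: X x + X y.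

Definition is_adj (X Y : op) : Prop := forall x y : Hs, ip (X x) y = ip x (Y y).

(* operator norm of X - Y is at most sqrt eps *)
Definition opclose (X Y : op) (eps : C) : Prop :=
  forall x : Hs, sqn (X x - Y x) <= eps * sqn x.

Definition op0 : op := fun _ => 0.

(* The graph: finite vertex type V, finite type E of oriented edges,       *)
(* source/target maps and orientation reversal rv (f |-> \bar f).          *)
Variables (V E : finType) (src tgt : E -> V) (rv : E -> E).

Definition is_graph : Prop :=
  [/\ involutive rv, (forall f, rv f != f) & (forall f, src (rv f) = tgt f)].

Definition adjv : rel V := fun a b => [exists f, (src f == a) && (tgt f == b)].

Definition is_connected : Prop := forall v w : V, connect adjv v w.

Fixpoint is_walk (x y : V) (s : seq E) : bool :=
  match s with
  | [::] => x == y
  | f :: s' => (src f == x) && is_walk (tgt f) y s'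
  end.

Fixpoint nonbacktracking (s : seq E) : bool :=
  match s with
  | f :: ((g :: _) as s') => (g != rv f) && nonbacktracking s'
  | _ => true
  end.

(* Groupoid representation, realized on the (internal) direct sum          *)
(* Hs = (+)_v H_v : P v is the orthogonal projection onto H_v, and U f is  *)
(* the unitary H_(src f) -> H_(tgt f) viewed as a partial isometry on Hs.  *)
Variables (P : V -> op) (U : E -> op).

Definition is_repr : Prop :=
  [/\ (forall v, [/\ is_linop (P v), is_adj (P v) (P v) & P v \o P v =1 P v]),
      (forall v w, v != w -> forall x, P v (P w x) = 0),
      (forall x, \sum_(v : V) P v x = x) &
      (forall f, [/\ is_linop (U f), U f \o P (src f) =1 U f,
                     P (tgt f) \o U f =1 U f,
                     is_adj (U f) (U (rv f)) &
                     U (rv f) \o U f =1 P (src f)])].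

(* U(gamma) = U_{f_m} ... U_{f_1} (the identity of H_x for the empty walk) *)
Definition walkU (x : V) (s : seq E) : op := foldl (fun A f => U f \o A) (P x) s.

(* component H_{wv} : H_v -> H_w of the Hamiltonian *)
Definition Hcomp (w v : V) : op :=
  fun x => \sum_(f | (src f == v) && (tgt f == w)) U f x.

Definition is_spanning_tree (T : {set E}) : Prop :=
  [/\ (forall f, (f \in T) = (rv f \in T)),
      (forall x y, exists s, is_walk x y s && all (mem T) s) &
      (forall x s, is_walk x x s -> all (mem T) s -> nonbacktracking s -> s = [::])].

Definition tree_path (T : {set E}) (x y : V) : seq E :=
  epsilon (inhabits [::])
    (fun s => [&& is_walk x y s, all (mem T) s & nonbacktracking s]).

(* UT T x y = U^tau_{yx} : H_x -> H_y *)
Definition UT (T : {set E}) (x y : V) : op := walkU x (tree_path T x y).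

(* ordered rooted spanning tree: u : 'I_k -> V enumerates u_1 < ... < u_k,
   with u_1 = r *)
Definition is_order (r : V) (u : 'I_#|V| -> V) : Prop :=
  bijective u /\ (forall i : 'I_#|V|, val i = 0%N -> u i = r).

(* The C*-algebra A_r generated by the U(gamma), gamma closed walks at r:  *)
Inductive inA (r : V) : op -> Prop :=
| inA_gen s : is_walk r r s -> inA r (walkU r s)
| inA_add X Y : inA r X -> inA r Y -> inA r (fun x => X x + Y x)
| inA_scale (a : C) X : inA r X -> inA r (fun x => a *: X x)
| inA_mul X Y : inA r X -> inA r Y -> inA r (X \o Y)
| inA_adj X Y : inA r X -> is_adj X Y -> inA r Y
| inA_lim X : (forall eps : C, 0 < eps -> exists Y, inA r Y /\ opclose X Y eps) ->
              inA r X.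

(* unitary element of A_r (unit of A_r is P r = id of H_r) *)
Definition unitary_in (r : V) (X : op) : Prop :=
  exists Y, [/\ is_adj X Y, X \o Y =1 P r & Y \o X =1 P r].

Definition opmx := 'I_#|V| -> 'I_#|V| -> op.

Definition mxmul (A B : opmx) : opmx :=
  fun i j x => \sum_(l < #|V|) A i l (B l j x).

Definition mxid (r : V) : opmx := fun i j => if i == j then P r else op0.

Definition mxeq (A B : opmx) : Prop := forall i j x, A i j x = B i j x.

Definition Htau (T : {set E}) (r : V) (u : 'I_#|V| -> V) : opmx :=
  fun i j => UT T (u i) r \o Hcomp (u i) (u j) \o UT T r (u j).

Definition is_gauge (r : V) (M : opmx) : Prop :=
  exists (d : 'I_#|V| -> op) (s : {perm 'I_#|V|}),
    (forall i, inA r (d i) /\ unitary_in r (d i)) /\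
    (forall i j x, M i j x = (if i == s j then d i else op0) x).

End GroupoidRep.

(* Main.v *)
Require Import Defs.
From HB Require Import structures.
From mathcomp Require Import all_boot all_order all_algebra all_fingroup.
From mathcomp Require Import reals complex.
From Stdlib Require Import ClassicalEpsilon FunctionalExtensionality.
Import Order.TTheory GRing.Theory Num.Theory.
Local Open Scope ring_scope.

Section Aux.
Variables (R : realType) (Hs : lmodType R[i]) (ip : Hs -> Hs -> R[i])
    (V E : finType) (src tgt : E -> V) (rv : E -> E)
    (P : V -> op Hs) (U : E -> op Hs).
Hypothesis Hrv : involutive rv.
Hypothesis Hsrc_rv : forall f, src (rv f) = tgt f.
Hypothesis HPlin : forall v, is_linop (P v).
Hypothesis HPidem : forall v x, P v (P v x) = P v x.
Hypothesis HUlin : forall f, is_linop (U f).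
Hypothesis HUP : forall f x, U f (P (src f) x) = U f x.
Hypothesis HPU : forall f x, P (tgt f) (U f x) = U f x.
Hypothesis HUadj : forall f, is_adj ip (U f) (U (rv f)).
Hypothesis HPadj : forall v, is_adj ip (P v) (P v).
Hypothesis Hip1 : forall (a : R[i]) (x y z : Hs), ip (a *: x + y) z = a * ip x z + ip y z.
Hypothesis Hip2 : forall x y : Hs, ip y x = (ip x y)^*.
Hypothesis HUrv : forall f x, U (rv f) (U f x) = P (src f) x.

Lemma tgt_rv f : tgt (rv f) = src f.
Proof. by rewrite -{2}(Hrv f) Hsrc_rv. Qed.

Lemma lin0 (X : op Hs) : is_linop X -> X 0 = 0.
Proof.
move=> H; have e := H 1 0 0; rewrite !scale1r addr0 in e.
by apply: (addrI (X 0)); rewrite addr0 -e.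
Qed.

Lemma linD (X : op Hs) : is_linop X -> forall x y, X (x + y) = X x + X y.
Proof. by move=> H x y; have := H 1 x y; rewrite !scale1r. Qed.

Definition wfold (A : op Hs) (s : seq E) : op Hs :=
  foldl (fun A f => U f \o A) A s.

Lemma walkUE x s : walkU P U x s = wfold (P x) s.
Proof. by []. Qed.

Lemma wfold_ext A B s : A =1 B -> wfold A s =1 wfold B s.
Proof.
elim: s A B => [|f s IH] A B h //= x.
by apply: IH => y /=; rewrite h.
Qed.

Lemma wfold_comp A B s : wfold (A \o B) s =1 wfold A s \o B.
Proof.
elim: s A => [|f s IH] A x //=.
have := IH (U f \o A) x; rewrite /= => <-; exact: wfold_ext.
Qed.

Lemma wfold_cat A a b : wfold A (a ++ b) = wfold (wfold A a) b.
Proof. by rewrite /wfold foldl_cat. Qed.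

Lemma wfold0 A s : A 0 = 0 -> wfold A s 0 = 0.
Proof.
elim: s A => [|f s IH] A h //=.
by apply: IH => /=; rewrite h lin0.
Qed.

Lemma walkU0 x s : walkU P U x s 0 = 0.
Proof. by rewrite walkUE wfold0 // lin0. Qed.

Lemma walkU_cons x f s : src f = x ->
  walkU P U x (f :: s) =1 walkU P U (tgt f) s \o U f.
Proof.
move=> <- y; rewrite walkUE /=.
rewrite (@wfold_ext (U f \o P (src f)) (P (tgt f) \o U f) s); first exact: wfold_comp.
by move=> z /=; rewrite HUP HPU.
Qed.

Lemma walk_end x y s : is_walk src tgt x y s ->
  forall z, P y (walkU P U x s z) = walkU P U x s z.
Proof.
elim: s x => [|f s IH] x /=.
  by move=> /eqP -> z; rewrite walkUE /= HPidem.
case/andP => /eqP hf hw z.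
by rewrite !walkU_cons //= IH.
Qed.

Lemma walk_start x s z : walkU P U x s (P x z) = walkU P U x s z.
Proof.
rewrite walkUE; have := wfold_comp (P x) (P x) s z; rewrite /= => <-.
by apply: wfold_ext => y /=; rewrite HPidem.
Qed.

Lemma walkU_cat x y a b : is_walk src tgt x y a ->
  walkU P U x (a ++ b) =1 walkU P U y b \o walkU P U x a.
Proof.
move=> h z; rewrite walkUE wfold_cat -walkUE.
rewrite (@wfold_ext (walkU P U x a) (P y \o walkU P U x a) b) ?wfold_comp //.
by move=> t /=; rewrite walk_end.
Qed.

Lemma is_walk_cat x y a b :
  is_walk src tgt x y (a ++ b) <-> exists z, is_walk src tgt x z a && is_walk src tgt z y b.
Proof.
elim: a x => [|f a IH] x /=.
  split; first by move=> h; exists x; rewrite eqxx.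
  by case=> z /andP [/eqP -> ].
split.
  case/andP => hf /IH [z /andP [h1 h2]]; exists z; by rewrite hf h1.
case=> z /andP [/andP [hf h1] h2]; rewrite hf /=; apply/IH; exists z; by rewrite h1.
Qed.

Lemma walk_cancel x y a f b :
  is_walk src tgt x y (a ++ f :: rv f :: b) -> is_walk src tgt x y (a ++ b).
Proof.
case/is_walk_cat => z /andP [h1 /= /andP [/eqP hf /andP [_ h2]]].
apply/is_walk_cat; exists z; rewrite h1 /=.
by rewrite tgt_rv hf in h2.
Qed.

Lemma walkU_cancel x y a f b :
  is_walk src tgt x y (a ++ f :: rv f :: b) ->
  walkU P U x (a ++ f :: rv f :: b) =1 walkU P U x (a ++ b).
Proof.
case/is_walk_cat => z /andP [h1 /= /andP [/eqP hf _]] t.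
rewrite !walkUE !wfold_cat /=; apply: wfold_ext => w /=.
by rewrite HUrv hf -!walkUE walk_end.
Qed.

Lemma nb_decomp s : ~~ nonbacktracking rv s ->
  exists a f b, s = a ++ f :: rv f :: b.
Proof.
elim: s => [|f s IH] //=.
case: s IH => [|g s] IH //=.
case: (eqVneq g (rv f)) => [-> _|hg] /=.
  by exists [::], f, s.
move=> /IH [a [h [b e]]]; exists (f :: a), h, b; by rewrite e.
Qed.


Definition revw (s : seq E) := rev (map rv s).
Lemma revw_cons f s : revw (f :: s) = revw s ++ [:: rv f].
Proof. by rewrite /revw /= rev_cons cats1. Qed.
Lemma revw_rcons s f : revw (rcons s f) = rv f :: revw s.
Proof. by rewrite /revw map_rcons rev_rcons. Qed.
Lemma revwK s : revw (revw s) = s.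
Proof. by rewrite /revw map_rev revK (mapK Hrv). Qed.
Lemma revw_cat a b : revw (a ++ b) = revw b ++ revw a.
Proof. by rewrite /revw map_cat rev_cat. Qed.

Lemma walk_rev x y s : is_walk src tgt x y s -> is_walk src tgt y x (revw s).
Proof.
elim: s x => [|f s IH] x /=; first by move/eqP ->.
case/andP=> /eqP hf hw; rewrite revw_cons; apply/is_walk_cat; exists (tgt f).
by rewrite IH //= Hsrc_rv tgt_rv hf !eqxx.
Qed.

Lemma cancel_rev x y s : is_walk src tgt x y s -> walkU P U x (s ++ revw s) =1 P x.
Proof.
elim/last_ind: s y => [|s f IH] y; first by [].
move=> hw z.
have e : rcons s f ++ revw (rcons s f) = s ++ f :: rv f :: revw s.
  by rewrite revw_rcons cat_rcons.
have hw2 : is_walk src tgt x x (s ++ f :: rv f :: revw s).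
  by rewrite -e; apply/is_walk_cat; exists y; rewrite hw walk_rev.
rewrite e (walkU_cancel _ _ _ _ _ hw2).
move: hw; rewrite -cats1 => /is_walk_cat [w /andP [h _]].
exact: IH h z.
Qed.

Lemma cancel_rev' x y s : is_walk src tgt x y s -> walkU P U y (revw s ++ s) =1 P y.
Proof. by move=> h; have := cancel_rev _ _ _ (walk_rev _ _ _ h); rewrite revwK. Qed.

Lemma adj_ext (X X' Y Y' : op Hs) : X =1 X' -> Y =1 Y' -> is_adj ip X Y -> is_adj ip X' Y'.
Proof. by move=> h1 h2 h a b; rewrite -h1 -h2. Qed.

Lemma walk_adj x y s : is_walk src tgt x y s ->
  is_adj ip (walkU P U x s) (walkU P U y (revw s)).
Proof.
elim: s x => [|f s IH] x /=; first by move/eqP ->; exact: HPadj.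
case/andP=> /eqP hf hw.
apply: (@adj_ext (walkU P U (tgt f) s \o U f) _ (U (rv f) \o walkU P U y (revw s))).
- by move=> z; rewrite (walkU_cons _ _ _ hf).
- move=> z; rewrite revw_cons (walkU_cat _ _ _ _ (walk_rev _ _ _ hw)) /=.
  by rewrite /= /walkU /= -Hsrc_rv HUP.
- by move=> a b /=; rewrite (IH _ hw) HUadj.
Qed.

Section Tree.
Variable T : {set E}.
Hypothesis HT : is_spanning_tree src tgt rv T.

Lemma tree_closed_aux n : forall x s, (size s <= n)%N -> is_walk src tgt x x s ->
  all (mem T) s -> walkU P U x s =1 P x.
Proof.
case: HT => _ _ H3.
elim: n => [|n IH] x s hs hw ha.
  by case: s hs hw ha => // hw ha z.
case: (boolP (nonbacktracking rv s)) => hnb.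
  by rewrite (H3 x s hw ha hnb).
case: (nb_decomp _ hnb) => a [f [b e]]; subst s.
move=> z; rewrite (walkU_cancel _ _ _ _ _ hw); apply: IH.
- by move: hs; rewrite !size_cat /= !addnS ltnS => /ltnW.
- exact: (walk_cancel _ _ _ _ _ hw).
- by move: ha; rewrite !all_cat /= => /and3P [-> _ /andP [_ ->]].
Qed.

Lemma tree_closed x s : is_walk src tgt x x s -> all (mem T) s -> walkU P U x s =1 P x.
Proof. move=> hw ha; exact: (tree_closed_aux _ _ _ (leqnn _) hw ha). Qed.

Lemma tree_path_exists x y : exists s,
  [&& is_walk src tgt x y s, all (mem T) s & nonbacktracking rv s].
Proof.
case: HT => _ H2 _.
case: (H2 x y) => s0 /andP [h1 h2].
have: forall n s, (size s <= n)%N -> is_walk src tgt x y s -> all (mem T) s -> exists s,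
  [&& is_walk src tgt x y s, all (mem T) s & nonbacktracking rv s].
  elim=> [|n IH] s hs hw ha.
    by case: s hs hw ha => // _ hw ha; exists [::]; rewrite hw.
  case: (boolP (nonbacktracking rv s)) => hnb.
    by exists s; rewrite hw ha hnb.
  case: (nb_decomp _ hnb) => a [f [b e]]; subst s.
  apply: (IH (a ++ b)).
  - by move: hs; rewrite !size_cat /= !addnS ltnS => /ltnW.
  - exact: (walk_cancel _ _ _ _ _ hw).
  - by move: ha; rewrite !all_cat /= => /and3P [-> _ /andP [_ ->]].
by move=> /(_ _ s0 (leqnn _) h1 h2).
Qed.

Lemma tp_spec x y :
  [&& is_walk src tgt x y (tree_path src tgt rv T x y), all (mem T) (tree_path src tgt rv T x y)
    & nonbacktracking rv (tree_path src tgt rv T x y)].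
Proof.
exact: (epsilon_spec (inhabits [::]) (fun s => [&& is_walk src tgt x y s, all (mem T) s & nonbacktracking rv s]) (tree_path_exists x y)).
Qed.

Lemma tp_walk x y : is_walk src tgt x y (tree_path src tgt rv T x y).
Proof. by case/and3P: (tp_spec x y). Qed.
Lemma tp_all x y : all (mem T) (tree_path src tgt rv T x y).
Proof. by case/and3P: (tp_spec x y). Qed.


Lemma UT_inv x y z : UT src tgt rv P U T y x (UT src tgt rv P U T x y z) = P x z.
Proof.
rewrite /UT; have := walkU_cat _ _ _ (tree_path src tgt rv T y x) (tp_walk x y) z.
rewrite /= => <-; apply: tree_closed.
  by apply/is_walk_cat; exists y; rewrite !tp_walk.
by rewrite all_cat !tp_all.
Qed.

Lemma UTrev x y z : walkU P U y (revw (tree_path src tgt rv T x y)) z = UT src tgt rv P U T y x z.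
Proof.
set p := tree_path src tgt rv T x y; set q := tree_path src tgt rv T y x.
have hp : is_walk src tgt x y p by apply: tp_walk.
have hq : is_walk src tgt y x q by apply: tp_walk.
rewrite -(walk_end _ _ _ (walk_rev _ _ _ hp)).
have hc : is_walk src tgt x x (p ++ q) by apply/is_walk_cat; exists y; rewrite hp hq.
have ha : all (mem T) (p ++ q) by rewrite all_cat !tp_all.
rewrite -(tree_closed _ _ hc ha) (walkU_cat _ _ _ _ hp) /=.
have := walkU_cat _ _ _ p (walk_rev _ _ _ hp) z; rewrite /= => <-.
rewrite (cancel_rev' _ _ _ hp).
by rewrite /UT walk_start.
Qed.

End Tree.

Lemma ip0l z : ip 0 z = 0.
Proof.
have e := Hip1 1 0 0 z; rewrite scale1r addr0 mul1r in e.
by apply: (addrI (ip 0 z)); rewrite addr0 -e.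
Qed.

Lemma ip0r z : ip z 0 = 0.
Proof. by rewrite Hip2 ip0l conjC0. Qed.

Lemma adj00 : is_adj ip (@op0 R Hs) (@op0 R Hs).
Proof. by move=> a b; rewrite /op0 ip0l ip0r. Qed.

Lemma sum_one n (k : 'I_n) (G : 'I_n -> Hs) :
  (forall l, l != k -> G l = 0) -> \sum_(l < n) G l = G k.
Proof. by move=> h; rewrite (bigD1 k) //= big1 ?addr0 // => l /h. Qed.

Lemma Hcomp0 w v : Hcomp src tgt U w v 0 = 0.
Proof. by rewrite /Hcomp big1 // => f _; rewrite lin0. Qed.

Lemma UT0 T x y : UT src tgt rv P U T x y 0 = 0.
Proof. exact: walkU0. Qed.

Lemma Htau0 T r u i j : Htau src tgt rv P U T r u i j 0 = 0.
Proof. by rewrite /Htau /= UT0 Hcomp0 UT0. Qed.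

Lemma main_aux (T T' : {set E}) (HT : is_spanning_tree src tgt rv T)
  (HT' : is_spanning_tree src tgt rv T') (r r' : V) (u u' : 'I_#|V| -> V)
  (hu : bijective u) (hu' : bijective u') :
  exists M Ms : opmx Hs V,
    [/\ (forall i j, inA ip src tgt P U r (M i j)) /\
          (forall i j, is_adj ip (M j i) (Ms i j)),
        mxeq (mxmul M Ms) (mxid P r),
        mxeq (mxmul Ms M) (mxid P r),
        mxeq (mxmul (mxmul M (Htau src tgt rv P U T r u)) Ms)
             (fun i j => UT src tgt rv P U T r' r \o Htau src tgt rv P U T' r' u' i j
                         \o UT src tgt rv P U T r r')
      & is_gauge ip src tgt P U r M].
Proof.
case: hu' => g' hg1 hg2.
have inj : injective (fun l => g' (u l)).
  by move=> a b /= /(can_inj hg2) /(bij_inj hu).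
pose s := perm inj.
have hs : forall i, u ((s^-1)%g i) = u' i.
  move=> i; have := permKV s i; rewrite permE /= => e.
  by rewrite -[in RHS]e hg2.
pose full i := tree_path src tgt rv T r (u' i) ++ tree_path src tgt rv T' (u' i) r' ++ tree_path src tgt rv T r' r.
have hfull : forall i, is_walk src tgt r r (full i).
  move=> i; apply/is_walk_cat; exists (u' i); rewrite tp_walk //=.
  by apply/is_walk_cat; exists r'; rewrite !tp_walk.
pose d i := walkU P U r (full i).
pose e i := walkU P U r (revw (full i)).
have d0 : forall i, d i 0 = 0 by move=> i; apply: walkU0.
have e0 : forall i, e i 0 = 0 by move=> i; apply: walkU0.
have de : forall i x, d i (e i x) = P r x.
  move=> i x; have := walkU_cat _ _ _ (full i) (walk_rev _ _ _ (hfull i)) x.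
  by rewrite /d /e /= => <-; rewrite (cancel_rev' _ _ _ (hfull i)).
have ed : forall i x, e i (d i x) = P r x.
  move=> i x; have := walkU_cat _ _ _ (revw (full i)) (hfull i) x.
  by rewrite /d /e /= => <-; rewrite (cancel_rev _ _ _ (hfull i)).
have d_dec : forall i z, d i (UT src tgt rv P U T (u' i) r z) =
    UT src tgt rv P U T r' r (UT src tgt rv P U T' (u' i) r' z).
  move=> i z; rewrite /d /full (walkU_cat _ _ _ _ (tp_walk T HT _ _)) /=.
  rewrite (walkU_cat _ _ _ _ (tp_walk T' HT' _ _)) /=.
  have h := UT_inv T HT (u' i) r z; rewrite /UT in h *; by rewrite h walk_start.
have e_dec : forall j z, UT src tgt rv P U T r (u' j) (e j z) =
    UT src tgt rv P U T' r' (u' j) (UT src tgt rv P U T r r' z).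
  move=> j z; rewrite /e /full !revw_cat -catA.
  rewrite (walkU_cat _ _ _ _ (walk_rev _ _ _ (tp_walk T HT _ _))) /=.
  rewrite (walkU_cat _ _ _ _ (walk_rev _ _ _ (tp_walk T' HT' _ _))) /=.
  rewrite !UTrev // (UT_inv T HT) /UT walk_end //; exact: tp_walk.
have eqxxI : forall x : 'I_#|V|, (x == x) = true by move=> x; exact: eqxx.
pose M : opmx Hs V := fun i j => if i == s j then d i else @op0 R Hs.
pose Ms : opmx Hs V := fun i j => if j == s i then e j else @op0 R Hs.
have M0 : forall i j, M i j 0 = 0 by move=> i j; rewrite /M; case: ifP.
have Ms0 : forall i j, Ms i j 0 = 0 by move=> i j; rewrite /Ms; case: ifP.
have sK : forall i, s ((s^-1)%g i) = i by move=> i; rewrite permKV.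
have sM : forall i l, (i == s l) = (l == (s^-1)%g i).
  move=> i l; apply/eqP/eqP => [->|->]; by rewrite ?permK ?permKV.
exists M, Ms; split.
- split=> i j.
    rewrite /M; case: ifP => _; first exact: inA_gen.
    have -> : (@op0 R Hs) = (fun x => 0 *: walkU P U r [::] x).
      by apply: functional_extensionality => x; rewrite scale0r.
    apply: (@inA_scale _ _ ip V E src tgt P U r 0 (walkU P U r [::])).
    by apply: inA_gen => /=.
  rewrite /M /Ms; case: ifP => _; last exact: adj00.
  exact: walk_adj (hfull j).
- move=> i j x; rewrite /mxmul (@sum_one _ ((s^-1)%g i)); last first.
    by move=> l hl; rewrite /M sM (negbTE hl).
  rewrite /M /Ms permKV eqxxI /mxid eq_sym; case: eqP => [->|_]; first exact: de.
  exact: d0.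
- move=> i j x; rewrite /mxmul (@sum_one _ (s i)); last first.
    by move=> l hl; rewrite /Ms (negbTE hl).
  rewrite /M /Ms eqxxI /mxid (inj_eq (@perm_inj _ s)); case: eqP => [->|_].
    exact: ed.
  exact: e0.
- move=> i j x; rewrite /mxmul (@sum_one _ ((s^-1)%g j)); last first.
    move=> l hl; rewrite /Ms sM (negbTE hl) /=.
    by apply: big1 => m _; rewrite Htau0 M0.
  rewrite (@sum_one _ ((s^-1)%g i)); last first.
    by move=> l hl; rewrite /M sM (negbTE hl).
  rewrite /M /Ms !permKV !eqxxI /Htau /= !hs e_dec d_dec.
  done.
- exists d, s; split => // i; split; first exact: inA_gen.
  exists (e i); split; [exact: walk_adj (hfull i) | exact: de | exact: ed].
Qed.

End Aux.

Theorem mainTheorem1 (R : realType) (Hs : lmodType R[i]) (ip : Hs -> Hs -> R[i])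
    (V E : finType) (src tgt : E -> V) (rv : E -> E)
    (P : V -> op Hs) (U : E -> op Hs) :
  is_hilbert ip ->
  is_graph src tgt rv ->
  is_connected src tgt ->
  is_repr ip src tgt rv P U ->
  forall (T : {set E}) (r : V) (u : 'I_#|V| -> V)
         (T' : {set E}) (r' : V) (u' : 'I_#|V| -> V),
  is_spanning_tree src tgt rv T -> is_order r u ->
  is_spanning_tree src tgt rv T' -> is_order r' u' ->
  exists M Ms : opmx Hs V,
    [/\ (forall i j, inA ip src tgt P U r (M i j)) /\
          (forall i j, is_adj ip (M j i) (Ms i j)),
        mxeq (mxmul M Ms) (mxid P r),
        mxeq (mxmul Ms M) (mxid P r),
        mxeq (mxmul (mxmul M (Htau src tgt rv P U T r u)) Ms)
             (fun i j => UT src tgt rv P U T r' r \o Htau src tgt rv P U T' r' u' i j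
                         \o UT src tgt rv P U T r r')
      & is_gauge ip src tgt P U r M].
Proof.
Proof.
move=> [[Hip1 Hip2 _ _] _ _] [HrvK _ Hsrc] _ [HPall HPP _ HUall]
  T r u T' r' u' HT [hu _] HT' [hu' _].
apply: (@main_aux _ _ ip _ _ src tgt rv P U HrvK Hsrc) => //.
- by move=> v; case: (HPall v).
- by move=> v x; case: (HPall v) => _ _ h; exact: h.
- by move=> f; case: (HUall f).
- by move=> f x; case: (HUall f) => _ h _ _ _; exact: h.
- by move=> f x; case: (HUall f) => _ _ h _ _; exact: h.
- by move=> f; case: (HUall f).
- by move=> v; case: (HPall v).
- by move=> f x; case: (HUall f) => _ _ _ _ h; exact: h.
Qed.
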